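(* Let $q$ be a power of an odd prime and let $f(X) \in \mathbb{F}_{q^2}[X]$ be a planar polynomial all of whose coefficients belong to the subfield $\mathbb{F}_q$. Then the orthogonal polarity graph $G_f$ satisfies \[ \alpha(G_f) \geq \tfrac{1}{2} q^2 (q-1), \] where $\alpha$ denotes the independence number.
   Context: Let $Q$ be a power of an odd prime. A polynomial $f(X)\in\mathbb{F}_Q[X]$ is planar if for every $a\in\mathbb{F}_Q^*$ the map $x\mapsto f(x+a)-f(x)$ is a bijection of $\mathbb{F}_Q$. For planar $f$, the projective plane $\Pi_f$ has point set $\{(x,y):x,y\in\mathbb{F}_Q\}\cup\{(x):x\in\mathbb{F}_Q\}\cup\{(\infty)\}$ and lines $[a,b]=\{(x,f(x-a)+b):x\in\mathbb{F}_Q\}\cup\{(a)\}$, $[c]=\{(c,y):y\in\mathbb{F}_Q\}\cup\{(\infty)\}$, $[\infty]=\{(c):c\in\mathbb{F}_Q\}\cup\{(\infty)\}$ ($a,b,c\in\mathbb{F}_Q$), with incidence being containment. It has the polarity $\omega$ given by $(\infty)^\omega=[\infty]$, $[\infty]^\omega=(\infty)$, $(c)^\omega=[-c]$, $[c]^\omega=(-c)$, $(x,y)^\omega=[-x,-y]$, $[a,b]^\omega=(-a,-b)$. The graph $G_f$ has as vertices the points of $\Pi_f$, with two distinct points $p_1,p_2$ adjacent iff $p_1$ lies on the line $p_2^\omega$. (In particular distinct $(x_1,y_1),(x_2,y_2)$ are adjacent iff $f(x_1+x_2)=y_1+y_2$.) Here this is applied with $Q=q^2$. *)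

(* Defs.v *)
From HB Require Import structures.
From mathcomp Require Import all_boot all_order all_algebra.
Set Implicit Arguments. Unset Strict Implicit. Unset Printing Implicit Defensive.
Import GRing.Theory.
Local Open Scope ring_scope.

Section Plane.
Variable F : finFieldType.

Definition planar (f : {poly F}) : Prop :=
  forall a : F, a != 0 -> bijective (fun x : F => f.[x + a] - f.[x]).

(* Points of Pi_f:  inl (x,y) = (x,y);  inr (inl c) = (c);  inr (inr tt) = (oo). *)
Definition point : finType := ((F * F) + (F + unit))%type.
(* Lines of Pi_f:   inl (a,b) = [a,b];  inr (inl c) = [c];  inr (inr tt) = [oo]. *)
Definition line : finType := ((F * F) + (F + unit))%type.

Definition incident (f : {poly F}) (P : point) (L : line) : bool :=
  match L, P with
  | inl (a, b), inl (x, y) => y == f.[x - a] + b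
  | inl (a, b), inr (inl c) => c == a
  | inl _, inr (inr _) => false
  | inr (inl c), inl (x, _) => x == c
  | inr (inl _), inr (inl _) => false
  | inr (inl _), inr (inr _) => true
  | inr (inr _), inl _ => false
  | inr (inr _), inr _ => true
  end.

Definition polar (P : point) : line :=
  match P with
  | inl (x, y) => inl (- x, - y)
  | inr (inl c) => inr (inl (- c))
  | inr (inr u) => inr (inr u)
  end.

Definition Gadj (f : {poly F}) (p1 p2 : point) : bool :=
  (p1 != p2) && incident f p1 (polar p2).

Definition independent (f : {poly F}) (S : {set point}) : bool :=
  [forall p1 in S, forall p2 in S, ~~ Gadj f p1 p2].

Definition alpha (f : {poly F}) : nat :=
  \max_(S : {set point} | independent f S) #|S|.

End Plane.

(* Main.v *)
Require Import Defs.
From HB Require Import structures.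
From mathcomp Require Import all_boot all_order all_algebra finfield zify.
Import GRing.Theory.
Local Open Scope ring_scope.

Lemma roots_bound (F : finFieldType) (q : nat) (c : F) : (1 < q)%N -> leq #|[set x : F | x^+q == c * x]| q.
Proof.
move=> hq.
set A := [set x : F | x^+q == c * x].
pose P : {poly F} := 'X^q - c *: 'X.
have szP : size P = q.+1.
  rewrite /P size_polyDl size_polyXn //.
  rewrite size_polyN; apply: (leq_ltn_trans (size_scale_leq _ _)); rewrite size_polyX; lia.
have P0 : P != 0 by rewrite -size_poly_eq0 szP.
have := max_poly_roots P0 (rs := enum A).
rewrite enum_uniq szP -cardE ltnS; apply => //.
apply/allP => x; rewrite mem_enum inE => /eqP hx.
rewrite /root /P !hornerE hx subrr. exact/eqP.
Qed.

Theorem theorem1 (p k q : nat) (F : finFieldType) (f : {poly F}) :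
  prime p -> odd p -> (0 < k)%N -> q = (p ^ k)%N ->
  #|F| = (q ^ 2)%N ->
  (forall i : nat, f`_i ^+ q = f`_i) ->
  planar f ->
  (q ^ 2 * (q - 1) <= 2 * alpha f)%N.
Proof.
move=> pp podd k0 qE cardF fcoef _.
have p2 : (2 < p)%N by case: p pp podd {qE} => [|[|[|]]].
have q1 : (1 < q)%N.
  rewrite qE; case: k k0 {qE} => // k _; rewrite expnS.
  have : (0 < p ^ k)%N by rewrite expn_gt0; lia.
  nia.
have pch : p \in [pchar F].
  by apply: (card_finPcharP (n := (k * 2)%N)) => //; rewrite cardF qE expnM.
have frobD : forall a b : F, (a + b) ^+ q = a ^+ q + b ^+ q.
  move=> a b; apply: exprDn_pchar; rewrite qE pnatX (pnatE _ pp) pch //.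
have frob0 : (0 : F) ^+ q = 0 by rewrite expr0n; case: (q) q1.
have frobN : forall a : F, (- a) ^+ q = - a ^+ q.
  move=> a; apply/eqP; rewrite -subr_eq0 opprK addrC -frobD subrr //; exact/eqP.
have frobB : forall a b : F, (a - b) ^+ q = a ^+ q - b ^+ q.
  by move=> a b; rewrite frobD frobN.
have frobq : forall a : F, (a ^+ q) ^+ q = a.
  by move=> a; rewrite -exprM mulnn -cardF expf_card.
have two0 : (2%:R : F) != 0.
  rewrite -(dvdn_pcharf pch); apply/negP => /dvdn_leq; lia.
have wneg : forall w : F, w != 0 -> w != - w.
  move=> w w0; apply/negP => /eqP e.
  have : w *+ 2 = 0 by rewrite mulr2n {1}e addNr.
  by move/eqP; rewrite -mulr_natl mulf_eq0 (negbTE two0) (negbTE w0).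
pose tau (y : F) := y ^+ q - y.
have tauD : forall a b, tau (a + b) = tau a + tau b.
  by move=> a b; rewrite /tau frobD opprD addrACA.
have tauN : forall a, tau (- a) = - tau a.
  by move=> a; rewrite /tau frobN opprB opprK addrC.
pose K := [set x : F | x ^+ q == x].
have inK : forall x, (x \in K) = (tau x == 0) by move=> x; rewrite inE /tau subr_eq0.
have fK : forall z, z \in K -> f.[z] \in K.
  move=> z; rewrite !inE => /eqP hz; rewrite horner_coef.
  rewrite (big_morph (fun a : F => a ^+ q) frobD frob0).
  apply/eqP; apply: eq_bigr => i _.
  by rewrite exprMn fcoef exprAC hz.
pose T := [set tau y | y in F].
have cardTK : #|F| = (#|T| * #|K|)%N.
  transitivity (\sum_(y : F) 1)%N; first by rewrite sum1_card.
  rewrite (partition_big tau (mem T)) /=; last by move=> y _; apply: imset_f.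
  rewrite -sum_nat_const; apply: eq_bigr => w /imsetP [y0 _ ->].
  rewrite sum1_card -(card_imset K (addrI y0)); apply: eq_card => y.
  rewrite /=; apply/idP/imsetP.
    move=> /eqP e; exists (y - y0); last by rewrite addrC subrK.
    rewrite inK; have -> : tau (y - y0) = tau y + tau (- y0) := tauD _ _.
    by rewrite tauN e subrr.
  move=> [x xK ->]; rewrite unfold_in /=. have -> : tau (y0 + x) = tau y0 + tau x := tauD _ _.
  by move: xK; rewrite inK => /eqP ->; rewrite addr0; exact: eqxx.
have Kq : leq #|K| q.
  have := @roots_bound F q 1 q1; congr (leq _ _); apply: eq_card => x; rewrite !inE mul1r //.
have Tq : leq #|T| q.
  have := @roots_bound F q (-1) q1; apply: leq_trans; apply: subset_leq_card.
  apply/subsetP => _ /imsetP [y _ ->]; rewrite inE mulN1r /tau frobB frobq opprB //.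
have Kq' : #|K| = q.
  move: cardTK; rewrite cardF => e; nia.
pose r := @enum_rank F.
pose Y := [set y : F | (tau y != 0) && (r (tau y) < r (- tau y))%N].
pose Y' := [set y : F | (tau y != 0) && (r (- tau y) < r (tau y))%N].
have cardY' : #|Y'| = #|Y|.
  rewrite -(card_preimset Y (@oppr_inj F)); apply: eq_card => y.
  rewrite !inE tauN opprK oppr_eq0 //.
have cardY : (#|Y| * 2 = q ^ 2 - q)%N.
  have := cardsC K; rewrite Kq' cardF => hC.
  have := cardsID Y (~: K).
  have -> : ~: K :&: Y = Y.
    apply/setIidPr/subsetP => y; rewrite in_setC inK inE => /andP [-> _] //.
  have -> : ~: K :\: Y = Y'.
    apply/setP => y; rewrite in_setD in_setC inK !inE.
    case: (boolP (tau y == 0)) => //= t0.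
    have : r (tau y) != r (- tau y) by rewrite (inj_eq enum_rank_inj) wneg.
    by move=> ne; rewrite andbT -leqNgt ltn_neqAle eq_sym ne.
  rewrite cardY'; lia.
pose S : {set point F} := [set inl xy | xy in setX K Y].
have cardS : #|S| = (#|K| * #|Y|)%N.
  rewrite card_imset ?cardsX //; move=> a b [] //.
have indS : independent f S.
  apply/forallP => pt1; apply/implyP => /imsetP [[x1 y1] h1 ->].
  apply/forallP => pt2; apply/implyP => /imsetP [[x2 y2] h2 ->].
  move: h1 h2; rewrite !inE /= => /andP [x1K y1Y] /andP [x2K y2Y].
  rewrite /Gadj /= negb_and; apply/orP; right; apply/negP => /eqP e.
  have x12 : x1 + x2 \in K.
    rewrite inK; have -> : tau (x1 + x2) = tau x1 + tau x2 := tauD _ _.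
    by rewrite /tau (eqP x1K) (eqP x2K) !subrr addr0.
  have ey : f.[x1 + x2] = y1 + y2 by rewrite e opprK subrK.
  have := fK _ x12; rewrite ey inK.
  have -> : tau (y1 + y2) = tau y1 + tau y2 := tauD _ _.
  rewrite addr_eq0 => /eqP t2.
  move: y1Y y2Y; rewrite t2 opprK => /andP [_ h1] /andP [_ h2].
  by move: (ltn_trans h1 h2); rewrite ltnn.
have := @leq_bigmax_cond _ _ (fun S0 : {set point F} => #|S0|) _ indS.
rewrite -/(alpha f) cardS Kq' => h.
have : (q ^ 2 * (q - 1) = q * (#|Y| * 2))%N by rewrite cardY; nia.
lia.
Qed.
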